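(* The category of cubes $\overline{\square}$ generated by the maps $\delta_i^\alpha$, $\sigma_i$ and $\gamma_i$ is not shell-complete. In other terms, the inclusion $\overline{\square}\subset\widehat{\square}$ is strict.
   Context: $[0]=\{()\}$, $[n]=\{0,1\}^n$ ($n\ge1$) with the product order; ${\rm PoSet}$ is posets with strictly increasing maps. Face maps $\delta_i^\alpha:[n-1]\to[n]$ insert $\alpha\in\{0,1\}$ at position $i$. For $n\ge2$, $1\le i\le n-1$: the symmetry map $\sigma_i:[n]\to[n]$ swaps coordinates $i$ and $i+1$, and the transverse degeneracy $\gamma_i:[n]\to[n]$ is $(\epsilon_1,\dots,\epsilon_n)\mapsto(\epsilon_1,\dots,\epsilon_{i-1},\max(\epsilon_i,\epsilon_{i+1}),\min(\epsilon_i,\epsilon_{i+1}),\epsilon_{i+2},\dots,\epsilon_n)$. $\overline\square$ is the subcategory of ${\rm PoSet}$ with objects $[n]$, $n\ge0$, generated by all $\delta_i^\alpha,\sigma_i,\gamma_i$. A map is adjacency-preserving if strictly increasing and it sends pairs at Hamming distance $1$ to pairs at Hamming distance $1$; $\widehat\square$ is the category with objects $[n]$ and all adjacency-preserving maps. A category of cubes is a subcategory of ${\rm PoSet}$ with objects $[n]$ containing all face maps and consisting of adjacency-preserving maps. For such $\mathcal A$, with $\mathcal A[p]=\mathcal A(-,[p])$ and $\mathrm{cosk}_1^{\mathcal A}$ the right adjoint of truncation of presheaves on $\mathcal A$ to the full subcategory on $[0],[1]$, $\mathcal A$ is shell-complete if $\mathcal A[p]\to\mathrm{cosk}_1^{\mathcal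 A}(\mathcal A[p]_{\le1})$ is an isomorphism for all $p\ge2$. (The paper shows $\widehat\square$ is the unique shell-complete category of cubes.) *)

(* Defs.v *)
From mathcomp Require Import all_boot.
Set Implicit Arguments. Unset Strict Implicit. Unset Printing Implicit Defensive.

(* The poset [n] = {0,1}^n, as finite functions 'I_n -> bool; [0] has one point. *)
Definition cube (n : nat) := {ffun 'I_n -> bool}.
(* Maps [m] -> [n] (as finite functions, so equality is decidable/extensional). *)
Definition hom (m n : nat) := {ffun cube m -> cube n}.

(* k-th coordinate (0-based), default false out of range *)
Definition coord n (x : cube n) (k : nat) : bool :=
  if @insub nat (fun k => k < n) 'I_n k is Some j then x j else false.
Definition mkcube n (F : nat -> bool) : cube n := [ffun j : 'I_n => F (val j)].

Definition cube_le n (x y : cube n) : bool := [forall j, x j ==> y j].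
Definition cube_lt n (x y : cube n) : bool := (x != y) && cube_le x y.
Definition strictly_increasing m n (f : hom m n) : Prop :=
  forall x y, cube_lt x y -> cube_lt (f x) (f y).
Definition hamming n (x y : cube n) : nat := #|[set j | x j != y j]|.
Definition adjacency_preserving m n (f : hom m n) : Prop :=
  strictly_increasing f /\
  (forall x y, hamming x y = 1 -> hamming (f x) (f y) = 1).

Definition idh n : hom n n := [ffun x => x].
Definition comp l m n (g : hom m n) (f : hom l m) : hom l n := [ffun x => g (f x)].

(* Face map delta_{i+1}^a : [n] -> [n+1] (0-based position i, 0 <= i <= n):
   inserts a at position i. *)
Definition delta (n i : nat) (a : bool) : hom n n.+1 :=
  [ffun x => mkcube n.+1 (fun k =>
     if k < i then coord x k else if k == i then a else coord x k.-1)].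
(* Symmetry sigma_{k+1} : [n] -> [n] (0-based, k+1 < n): swaps coords k, k+1. *)
Definition sigma (n k : nat) : hom n n :=
  [ffun x => mkcube n (fun j =>
     if j == k then coord x k.+1 else if j == k.+1 then coord x k else coord x j)].
(* Transverse degeneracy gamma_{k+1} : [n] -> [n] (0-based, k+1 < n). *)
Definition gamma (n k : nat) : hom n n :=
  [ffun x => mkcube n (fun j =>
     if j == k then coord x k || coord x k.+1
     else if j == k.+1 then coord x k && coord x k.+1 else coord x j)].

Inductive cubebar : forall m n : nat, hom m n -> Prop :=
| cb_id n : cubebar (idh n)
| cb_comp l m n (g : hom m n) (f : hom l m) :
    cubebar g -> cubebar f -> cubebar (comp g f)
| cb_delta n i a : i <= n -> cubebar (delta n i a)
| cb_sigma n k : k.+1 < n -> cubebar (sigma n k)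
| cb_gamma n k : k.+1 < n -> cubebar (gamma n k).

(* A morphism g : A[n]_{<=1} -> A[p]_{<=1} of presheaves on the full subcategory
   on [0],[1] is given by components g k (k = 0, 1), natural w.r.t. all maps of A
   between [0],[1].  (Only values on A-maps matter.) *)
Definition shell_transf (A : forall m n, hom m n -> Prop) (n p : nat)
    (g : forall k, hom k n -> hom k p) : Prop :=
  (forall k (u : hom k n), k <= 1 -> A k n u -> A k p (g k u)) /\
  (forall j k (e : hom j k) (u : hom k n), j <= 1 -> k <= 1 ->
     A j k e -> A k n u -> g j (comp u e) = comp (g k u) e).

(* A[p] -> cosk_1(A[p]_{<=1}) is an isomorphism: at every level [n], the map
   f |-> (u |-> f o u) from A([n],[p]) to shell morphisms is bijective. *)
Definition shell_complete (A : forall m n, hom m n -> Prop) : Prop :=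
  forall p n, 2 <= p ->
    (forall f f' : hom n p, A n p f -> A n p f' ->
       (forall k (u : hom k n), k <= 1 -> A k n u -> comp f u = comp f' u) ->
       f = f') /\
    (forall g : forall k, hom k n -> hom k p, @shell_transf A n p g ->
       exists2 f : hom n p, A n p f &
         forall k (u : hom k n), k <= 1 -> A k n u -> g k u = comp f u).

(* Main.v *)
Require Import Defs.
From mathcomp Require Import all_boot zify.
Set Implicit Arguments. Unset Strict Implicit. Unset Printing Implicit Defensive.

Lemma coord_mk n F k : coord (mkcube n F) k = if k < n then F k else false.
Proof.
rewrite /coord; case: insubP => [j kn <-|]; first by rewrite ffunE ltn_ord.
by move/negbTE=> ->.
Qed.

Lemma coordE n (x : cube n) (j : 'I_n) : coord x j = x j.
Proof. by rewrite /coord valK. Qed.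

Lemma coord_out n (x : cube n) k : n <= k -> coord x k = false.
Proof. by move=> h; rewrite /coord insubN // -leqNgt. Qed.

Lemma cube_ext n (x y : cube n) : (forall k, k < n -> coord x k = coord y k) -> x = y.
Proof. by move=> h; apply/ffunP=> j; rewrite -!coordE h. Qed.

Definition B4 : eqType := (bool * bool * bool * bool)%type.
Definition getB (b : B4) (i : nat) : bool :=
  let: (b0, b1, b2, b3) := b in
  match i with 0 => b0 | 1 => b1 | 2 => b2 | 3 => b3 | _ => false end.
Definition tup (x : cube 4) : B4 := (coord x 0, coord x 1, coord x 2, coord x 3).
Definition untup (b : B4) : cube 4 := mkcube 4 (getB b).

Lemma getB_tup x i : getB (tup x) i = coord x i.
Proof.
case: i => [|[|[|[|i]]]] //=; by rewrite coord_out.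
Qed.
Lemma coord_untup b i : coord (untup b) i = getB b i.
Proof. rewrite coord_mk; case: b => [[[??]?]?]; case: ifP => //; by move=> /negbT; rewrite -leqNgt; do 4 (case: i => [|i] //=). Qed.
Lemma tupK x : untup (tup x) = x.
Proof. by apply: cube_ext => k _; rewrite coord_untup getB_tup. Qed.
Lemma untupK b : tup (untup b) = b.
Proof. by case: b => [[[??]?]?]; rewrite /tup !coord_untup. Qed.

Notation dcomp := Defs.comp.
Definition F (f : hom 4 4) (b : B4) : B4 := tup (f (untup b)).
Definition mk4 (E : nat -> bool) : B4 := (E 0, E 1, E 2, E 3).
Definition sigB k (b : B4) : B4 := mk4 (fun j =>
  if j == k then getB b k.+1 else if j == k.+1 then getB b k else getB b j).
Definition gamB k (b : B4) : B4 := mk4 (fun j =>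
  if j == k then getB b k || getB b k.+1
  else if j == k.+1 then getB b k && getB b k.+1 else getB b j).

Lemma F_sigma k b : F (sigma 4 k) b = sigB k b.
Proof. rewrite /F /tup /sigma ffunE !coord_mk /= /sigB; case: b => [[[??]?]?]; by do 5 (case: k => [|k] //=). Qed.
Lemma F_gamma k b : F (gamma 4 k) b = gamB k b.
Proof. rewrite /F /tup /gamma ffunE !coord_mk /= /gamB; case: b => [[[??]?]?]; by do 5 (case: k => [|k] //=). Qed.
Lemma F_comp (g h : hom 4 4) b : F (dcomp g h) b = F g (F h b).
Proof. by rewrite /F /Defs.comp ffunE tupK. Qed.
Lemma F_id b : F (idh 4) b = b.
Proof. by rewrite /F ffunE untupK. Qed.

Definition bb := [:: false; true].
Definition all16 : seq B4 := [seq (x, d) | x <- [seq (y, c) | y <- [seq (a, b) | a <- bb, b <- bb], c <- bb], d <- bb].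
Arguments all16 : simpl never.
Lemma mem_all16 b : b \in all16.
Proof. by case: b => [[[[][]][]][]]. Qed.

Definition key (f : hom 4 4) : seq B4 := map (F f) all16.
Definition compk (G H : seq B4) : seq B4 := [seq nth y G (index y all16) | y <- H].
Lemma nth_key (G : B4 -> B4) y : nth y (map G all16) (index y all16) = G y.
Proof. by rewrite (nth_map y) ?index_mem ?mem_all16 // nth_index ?mem_all16. Qed.
Lemma key_comp g h : key (dcomp g h) = compk (key g) (key h).
Proof.
rewrite /key /compk -map_comp; apply: eq_map => b.
by rewrite F_comp; apply/esym/nth_key.
Qed.

Definition gens4 : seq (seq B4) :=
  [seq map (sigB k) all16 | k <- iota 0 3] ++ [seq map (gamB k) all16 | k <- iota 0 3].

Inductive trie := TE | TL | TN of trie & trie.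
Fixpoint memT (k : seq bool) (t : trie) : bool :=
  match k, t with
  | [::], TL => true
  | b :: k', TN l r => memT k' (if b then r else l)
  | _, _ => false
  end.
Fixpoint insT (k : seq bool) (t : trie) : trie :=
  match k with
  | [::] => TL
  | b :: k' =>
    let: (l, r) := match t with TN l r => (l, r) | _ => (TE, TE) end in
    if b then TN l (insT k' r) else TN (insT k' l) r
  end.
Fixpoint elems (t : trie) : seq (seq bool) :=
  match t with
  | TE => [::]
  | TL => [:: [::]]
  | TN l r => map (cons false) (elems l) ++ map (cons true) (elems r)
  end.
Lemma memT_elems k t : memT k t -> k \in elems t.
Proof.
elim: t k => [||l IHl r IHr] [|b k] //=; rewrite mem_cat; case: b => h.
  by rewrite (mem_map (fun u v (e : true :: u = true :: v) => congr1 behead e)) IHr ?orbT.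
by rewrite (mem_map (fun u v (e : false :: u = false :: v) => congr1 behead e)) IHl.
Qed.

Definition bits (c : seq B4) : seq bool :=
  flatten [seq [:: b.1.1.1; b.1.1.2; b.1.2; b.2] | b <- c].
Fixpoint unbits (k : seq bool) : seq B4 :=
  match k with
  | b0 :: b1 :: b2 :: b3 :: k' => (b0, b1, b2, b3) :: unbits k'
  | _ => [::]
  end.
Lemma bitsK c : unbits (bits c) = c.
Proof. by elim: c => [|[[[? ?] ?] ?] c IH] //=; rewrite IH. Qed.

Fixpoint bfs (fuel : nat) (seen : trie) (front : seq (seq B4)) : trie :=
  match fuel with
  | 0 => seen
  | fuel'.+1 =>
    let: (seen', step) := foldl (fun acc c =>
        foldl (fun acc2 g => let d := compk g c in
                  if memT (bits d) acc2.1 then acc2 else (insT (bits d) acc2.1, d :: acc2.2))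
          acc gens4) (seen, [::]) front in
    if step is [::] then seen else bfs fuel' seen' step
  end.
Definition Strie := bfs 60 (insT (bits all16) TE) [:: all16].

Definition f0tab : seq B4 := [:: (false, false, false, false); (false, false, false, true); (false, false, false, true); (false, false, true, true); (false, false, false, true); (false, false, true, true); (false, true, false, true); (false, true, true, true); (false, false, false, true); (false, true, false, true); (false, false, true, true); (false, true, true, true); (false, true, false, true); (false, true, true, true); (false, true, true, true); (true, true, true, true)].
Definition f0B (b : B4) : B4 := nth b f0tab (index b all16).
Definition f0 : hom 4 4 := [ffun x => untup (f0B (tup x))].
Lemma F_f0 b : F f0 b = f0B b.
Proof. by rewrite /F ffunE !untupK. Qed.

Definition chk (t : trie) : bool :=
  [&& all (fun k => all (fun G => memT (bits (compk G (unbits k))) t) gens4) (elems t),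
      memT (bits all16) t & ~~ memT (bits (map f0B all16)) t].
Lemma Scheck : exists t, chk t.
Proof. exists Strie. vm_compute. reflexivity. Qed.

Section Inv.
Variable t : trie.
Hypothesis Ht : chk t.

Lemma Sclosed G c : G \in gens4 -> memT (bits c) t -> memT (bits (compk G c)) t.
Proof.
move=> hG /memT_elems hc; case/and3P: Ht => /allP/(_ _ hc)/allP/(_ _ hG).
by rewrite bitsK.
Qed.

Definition inS (m : nat) : hom 4 m -> bool :=
  match m with 4 => fun h => memT (bits (key h)) t | _ => fun _ => false end.

Lemma key_gen (G : hom 4 4) (H : B4 -> B4) : (forall b, F G b = H b) ->
  map H all16 \in gens4 -> forall h : hom 4 4, inS h -> inS (dcomp G h).
Proof.
move=> eG hin h hh; change (is_true (memT (bits (key h)) t)) in hh.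
change (is_true (memT (bits (key (dcomp G h))) t)); rewrite key_comp.
have -> : key G = map H all16 by apply: eq_map.
exact: (Sclosed hin hh).
Qed.

Lemma dcompA l m n p (h : hom m n) (g : hom l m) (f : hom p l) :
  dcomp (dcomp h g) f = dcomp h (dcomp g f).
Proof. by apply/ffunP => x; rewrite !ffunE. Qed.

Lemma inv m n (f : hom m n) : cubebar f ->
  m <= n /\ (m = n -> forall h : hom 4 m, inS h -> inS (dcomp f h)).
Proof.
elim=> {m n f}.
- move=> n; split=> // _ h.
  have -> : dcomp (idh n) h = h by apply/ffunP=> x; rewrite /idh !ffunE.
  by [].
- move=> l m n g f _ [lmn IHg] _ [llm IHf]; split; first exact: leq_trans llm lmn.
  move=> eln h hh.
  have elm : l = m by apply/eqP; rewrite eqn_leq llm; move: lmn; rewrite -eln.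
  have emn : m = n by rewrite -elm.
  by rewrite dcompA; apply: IHg => //; apply: IHf.
- by move=> n i a _; split=> // e; exfalso; lia.
- move=> n k hk; split=> // _.
  do 4 (case: n hk => [|n] hk; first by []).
  case: n hk => [|n] hk h; last by [].
  case: k hk => [_|[_|[_|//]]]; apply: (key_gen (F_sigma _)); by rewrite mem_cat; apply/orP; left; apply: (map_f (fun k => map (sigB k) all16)).
- move=> n k hk; split=> // _.
  do 4 (case: n hk => [|n] hk; first by []).
  case: n hk => [|n] hk h; last by [].
  case: k hk => [_|[_|[_|//]]]; apply: (key_gen (F_gamma _)); by rewrite mem_cat; apply/orP; right; apply: (map_f (fun k => map (gamB k) all16)).
Qed.
End Inv.

Lemma f0_not : ~ cubebar f0.
Proof.
case: Scheck => t Ht.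
move=> /(inv Ht) [_ /(_ erefl (idh 4))].
have -> : dcomp f0 (idh 4) = f0 by apply/ffunP=> x; rewrite /idh !ffunE.
have hid : key (idh 4) = all16 by rewrite /key (eq_map F_id) map_id.
have hf : key f0 = map f0B all16 by apply: eq_map; exact: F_f0.
case/and3P: Ht => _ h1 /negP h2.
change ((is_true (memT (bits (key (idh 4))) t) -> is_true (memT (bits (key f0)) t)) -> False).
rewrite hid hf => /(_ h1); exact: h2.
Qed.

Definition hamB (a b : B4) : nat := count (fun j => getB a j != getB b j) (iota 0 4).
Lemma hamming_tup (x y : cube 4) : hamming x y = hamB (tup x) (tup y).
Proof.
rewrite /hamming cardsE -sum1_card big_mkcond /= !big_ord_recr big_ord0 /=.
rewrite !unfold_in -!coordE /= /hamB /=.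
by case: (coord x 0 != _); case: (coord x 1 != _); case: (coord x 2 != _); case: (coord x 3 != _).
Qed.

Definition leB (a b : B4) : bool := all (fun j => getB a j ==> getB b j) (iota 0 4).
Definition ltB (a b : B4) : bool := (a != b) && leB a b.
Lemma cube_le_tup (x y : cube 4) : cube_le x y = leB (tup x) (tup y).
Proof.
rewrite /cube_le /leB; apply/forallP/allP => [h j|h j].
  rewrite mem_iota add0n => /andP [_ hj]; rewrite !getB_tup.
  by have := h (Ordinal hj); rewrite -!coordE.
by rewrite -!coordE -!getB_tup; apply: h; rewrite mem_iota ltn_ord.
Qed.
Lemma cube_lt_tup (x y : cube 4) : cube_lt x y = ltB (tup x) (tup y).
Proof. by rewrite /cube_lt /ltB cube_le_tup (can_eq tupK). Qed.

Lemma tup_f0 x : tup (f0 x) = f0B (tup x).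
Proof. by rewrite ffunE untupK. Qed.

Lemma f0_check :
  all (fun a => all (fun b => (ltB a b ==> ltB (f0B a) (f0B b)) &&
     ((hamB a b == 1) ==> (hamB (f0B a) (f0B b) == 1))) all16) all16.
Proof. by vm_compute. Qed.

Lemma f0_adj : adjacency_preserving f0.
Proof.
have H a b : (ltB a b ==> ltB (f0B a) (f0B b)) &&
     ((hamB a b == 1) ==> (hamB (f0B a) (f0B b) == 1)).
  by move/allP: f0_check => /(_ a (mem_all16 a)) /allP /(_ b (mem_all16 b)).
split.
  move=> x y; rewrite !cube_lt_tup !tup_f0 => hl.
  by case/andP: (H (tup x) (tup y)) => /implyP h _; apply: h.
move=> x y; rewrite !hamming_tup !tup_f0 => hl.
by case/andP: (H (tup x) (tup y)) => _ /implyP /(_ (introT eqP hl)) /eqP.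
Qed.

Definition cov n (x y : cube n) : Prop := exists j, [/\ j < n, coord x j = false,
  coord y j = true & forall i, i != j -> coord x i = coord y i].

Lemma coord_delta n i a (x : cube n) k : coord (delta n i a x) k =
  if k < n.+1 then (if k < i then coord x k else if k == i then a else coord x k.-1) else false.
Proof. by rewrite ffunE coord_mk. Qed.
Lemma coord_sigma n k (x : cube n) l : coord (sigma n k x) l =
  if l < n then (if l == k then coord x k.+1 else if l == k.+1 then coord x k else coord x l) else false.
Proof. by rewrite ffunE coord_mk. Qed.
Lemma coord_gamma n k (x : cube n) l : coord (gamma n k x) l =
  if l < n then (if l == k then coord x k || coord x k.+1
     else if l == k.+1 then coord x k && coord x k.+1 else coord x l) else false.
Proof. by rewrite ffunE coord_mk. Qed.

Lemma cov_delta n i a x y : i <= n -> cov x y -> cov (delta n i a x) (delta n i a y).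
Proof.
move=> hi [j [jn hx hy ho]].
case: (ltnP j i) => ji.
- exists j; rewrite !coord_delta ji ltnS (ltnW jn) hx hy; split=> // l hl.
  rewrite !coord_delta; case: ifP => // _; case: ifP => hli; first exact: ho.
  case: ifP => // hli2; apply: ho; lia.
- exists j.+1; rewrite !coord_delta !ltnS jn.
  have -> : (j.+1 < i) = false by apply/negbTE; lia.
  have -> : (j.+1 == i) = false by apply/negbTE; lia.
  split=> // l hl; rewrite !coord_delta; case: ifP => // _; case: ifP => hli.
    by apply: ho; lia.
  case: ifP => // hl2; apply: ho; case: l hl hli hl2 => [|l] //= hl hli hl2; lia.
Qed.

Ltac fin ho := first [ by [] | by apply: ho; lia | by exfalso; lia ].
Ltac brs ho := rewrite ?coord_sigma ?coord_gamma; case: ifP => // _;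
  (case: ifP => [/eqP ?|?]); try (case: ifP => [/eqP ?|?]); fin ho.

Lemma cov_sigma n k x y : k.+1 < n -> cov x y -> cov (sigma n k x) (sigma n k y).
Proof.
move=> hk [j [jn hx hy ho]].
have hk' : k < n by lia.
have [ejk|jk] := eqVneq j k.
  subst j; exists k.+1; rewrite !coord_sigma hk eqn_leq ltnn /= eqxx; split=> // l hl.
  brs ho.
have [ejk1|jk1] := eqVneq j k.+1.
  subst j; exists k; rewrite !coord_sigma hk' eqxx; split=> // l hl.
  brs ho.
exists j; rewrite !coord_sigma jn (negbTE jk) (negbTE jk1); split=> // l hl.
brs ho.
Qed.

Ltac fing ho rw := first [ by [] | by rw | by apply: ho; lia | by exfalso; lia ].
Ltac brsg ho rw := rewrite ?coord_gamma; case: ifP => // _;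
  (case: ifP => [/eqP ?|?]); try (case: ifP => [/eqP ?|?]); subst; fing ho rw.

Lemma cov_gamma n k x y : k.+1 < n -> cov x y -> cov (gamma n k x) (gamma n k y).
Proof.
move=> hk [j [jn hx hy ho]].
have hk' : k < n by lia.
have [ejk|jk] := eqVneq j k.
  subst j; have e1 : coord x k.+1 = coord y k.+1 by apply: ho; lia.
  case hb: (coord x k.+1).
  - exists k.+1; rewrite !coord_gamma hk eqn_leq ltnn /= eqxx hx hy -e1 hb; split=> // l hl.
    brsg ho ltac:(rewrite hx hy -e1 hb).
  - exists k; rewrite !coord_gamma hk' eqxx hx hy; split=> // l hl.
    brsg ho ltac:(rewrite hx hy -e1 hb).
have [ejk1|jk1] := eqVneq j k.+1.
  subst j; have e1 : coord x k = coord y k by apply: ho; lia.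
  case hb: (coord x k).
  - exists k.+1; rewrite !coord_gamma hk eqn_leq ltnn /= eqxx hx hy -e1 hb; split=> // l hl.
    brsg ho ltac:(rewrite hx hy -e1 hb).
  - exists k; rewrite !coord_gamma hk' eqxx hx hy -e1 hb; split=> // l hl.
    brsg ho ltac:(rewrite hx hy -e1 hb).
exists j; rewrite !coord_gamma jn (negbTE jk) (negbTE jk1); split=> // l hl.
have ek : coord x k = coord y k by apply: ho; lia.
have ek1 : coord x k.+1 = coord y k.+1 by apply: ho; lia.
brsg ho ltac:(rewrite ek ek1).
Qed.

Lemma cov_inv m n (f : hom m n) : cubebar f -> forall x y, cov x y -> cov (f x) (f y).
Proof.
elim=> {m n f}.
- by move=> n x y; rewrite !ffunE.
- by move=> l m n g f _ IHg _ IHf x y h; rewrite !ffunE; apply/IHg/IHf.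
- by move=> n i a hi x y; apply: cov_delta.
- by move=> n k hk x y; apply: cov_sigma.
- by move=> n k hk x y; apply: cov_gamma.
Qed.

Definition pt (c : cube 4) : hom 0 4 :=
  dcomp (delta 3 3 (coord c 3)) (dcomp (delta 2 2 (coord c 2))
    (dcomp (delta 1 1 (coord c 1)) (delta 0 0 (coord c 0)))).
Lemma pt_cb c : cubebar (pt c).
Proof. by do ! apply: cb_comp; apply: cb_delta. Qed.
Lemma ptE c z : pt c z = c.
Proof.
apply: cube_ext => k hk; rewrite !ffunE.
by case: k hk => [|[|[|[|//]]]] _; do 5 rewrite ?coord_mk /=.
Qed.
Lemma hom0_cb (v : hom 0 4) : cubebar v.
Proof.
set z : cube 0 := [ffun _ => false].
have -> : v = pt (v z); last exact: pt_cb.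
apply/ffunP => w; rewrite ptE; congr (v _); by apply/ffunP => -[].
Qed.

Definition edgemap (j : nat) (x : cube 4) : hom 1 4 :=
  match j with
  | 0 => dcomp (delta 3 3 (coord x 3)) (dcomp (delta 2 2 (coord x 2)) (delta 1 1 (coord x 1)))
  | 1 => dcomp (delta 3 3 (coord x 3)) (dcomp (delta 2 2 (coord x 2)) (delta 1 0 (coord x 0)))
  | 2 => dcomp (delta 3 3 (coord x 3)) (dcomp (delta 2 1 (coord x 1)) (delta 1 0 (coord x 0)))
  | _ => dcomp (delta 3 2 (coord x 2)) (dcomp (delta 2 1 (coord x 1)) (delta 1 0 (coord x 0)))
  end.
Lemma edgemap_cb j x : cubebar (edgemap j x).
Proof. by case: j => [|[|[|j]]] /=; do ! apply: cb_comp; apply: cb_delta. Qed.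
Lemma edgemapE j x z k : j < 4 -> k < 4 ->
  coord (edgemap j x z) k = if k == j then coord z 0 else coord x k.
Proof.
by case: j => [|[|[|[|//]]]] _; case: k => [|[|[|[|//]]]] _; rewrite !ffunE; do 5 rewrite ?coord_mk /=.
Qed.

Definition e0 : cube 1 := [ffun _ => false].
Definition e1 : cube 1 := [ffun _ => true].
Lemma hz0 : coord e0 0 = false. Proof. by rewrite (coordE e0 ord0) ffunE. Qed.
Lemma hz1 : coord e1 0 = true. Proof. by rewrite (coordE e1 ord0) ffunE. Qed.
Lemma cov_e : cov e0 e1.
Proof. by exists 0; split=> //; [exact: hz0 | exact: hz1 | move=> -[|i] //; rewrite !coord_out]. Qed.
Lemma cube1 (z : cube 1) : z = e0 \/ z = e1.
Proof.
case h: (coord z 0); [right|left]; apply: cube_ext => -[|k] // _;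
  by rewrite h ?hz0 ?hz1.
Qed.

Lemma hom1_cb (v : hom 1 4) : cov (v e0) (v e1) -> cubebar v.
Proof.
move=> [j [jn hx hy ho]].
have -> : v = edgemap j (v e0); last exact: edgemap_cb.
apply/ffunP => z; apply: cube_ext => k hk; rewrite edgemapE //.
case: (cube1 z) => ->; case: eqP => [->|/eqP hkj] //; rewrite ?hz0 ?hz1 //.
by rewrite ho.
Qed.

Definition covB (a b : B4) : bool :=
  has (fun j => [&& getB a j == false, getB b j &
        all (fun i => (i == j) || (getB a i == getB b i)) (iota 0 4)]) (iota 0 4).

Lemma cov_tup (x y : cube 4) : cov x y -> covB (tup x) (tup y).
Proof.
move=> [j [jn hx hy ho]]; apply/hasP; exists j; first by rewrite mem_iota.
apply/and3P; split; [by rewrite getB_tup hx | by rewrite getB_tup hy | apply/allP => i _].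
by case: eqP => [//|/eqP h]; rewrite !getB_tup ho // eqxx.
Qed.
Lemma tup_cov (x y : cube 4) : covB (tup x) (tup y) -> cov x y.
Proof.
case/hasP=> j; rewrite mem_iota add0n => /andP [_ jn] /and3P [/eqP hx hy /allP ha].
exists j; rewrite -!getB_tup; split=> // i hi.
case: (ltnP i 4) => h4; last by rewrite !coord_out.
have := ha i; rewrite mem_iota h4 (negbTE hi) => /(_ isT) /eqP.
by rewrite !getB_tup.
Qed.

Lemma f0_cov_check : all (fun a => all (fun b => covB a b ==> covB (f0B a) (f0B b)) all16) all16.
Proof. by vm_compute. Qed.

Lemma f0_cov x y : cov x y -> cov (f0 x) (f0 y).
Proof.
move/cov_tup => h; apply: tup_cov; rewrite !tup_f0.
move/allP: f0_cov_check => /(_ _ (mem_all16 (tup x))) /allP /(_ _ (mem_all16 (tup y))) /implyP.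
exact.
Qed.

Theorem theorem7p16 :
  ~ shell_complete cubebar /\
  exists m n (f : hom m n), adjacency_preserving f /\ ~ cubebar f.
Proof.
split; last by exists 4, 4, f0; split; [exact: f0_adj | exact: f0_not].
move=> SC; have [_ H] := SC 4 4 isT.
have [|f fcb hf] := H (fun k u => dcomp f0 u).
  split.
    move=> k u; case: k u => [|[|//]] u _ hu; first exact: hom0_cb.
    apply: hom1_cb; rewrite [dcomp _ _ e0]ffunE [dcomp _ _ e1]ffunE; apply: f0_cov; exact: (cov_inv hu cov_e).
  by move=> j k e u _ _ _ _; apply/ffunP => z; rewrite !ffunE.
apply: f0_not; suff -> : f0 = f by [].
apply/ffunP => x.
set z : cube 0 := [ffun _ => false].
have := hf 0 (pt x) isT (pt_cb x).
move/(congr1 (fun w : hom 0 4 => w z)); rewrite [dcomp f0 _ z]ffunE [dcomp f _ z]ffunE ptE.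
done.
Qed.
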